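(* Let $\mathcal{G}$ be a finite groupoid and let $\mathcal{H}$ be a connected wide subgroupoid of $\mathcal{G}$. Then $\mathbb{C}[\mathcal{G}/\mathcal{H}]\cong\mathrm{Ind}^\mathcal{G}_\mathcal{H}\mathrm{Tri}$ as functors $\mathcal{G}\to\mathbf{vect}$.
   Context: A groupoid is a category in which every morphism is invertible; all groupoids are finite and nonempty; $gg'$ denotes composition. A subgroupoid is wide if it contains all objects, connected if any two of its objects are joined by one of its morphisms. For $x\in\mathcal{G}_0$ let $\mathrm{Mor}_\mathcal{G}(-,x):=\coprod_{y\in\mathcal{G}_0}\mathcal{G}(y,x)$, with the equivalence relation $a\sim_{\mathcal{H},x}b\iff a^{-1}b\in\mathcal{H}_1$; write $a\mathcal{H}$ for the class of $a$. The $\mathcal{G}$-set $\mathcal{G}/\mathcal{H}:\mathcal{G}\to\mathbf{set}$ sends $x$ to $\mathrm{Mor}_\mathcal{G}(-,x)/\sim_{\mathcal{H},x}$ and $g:x\to y$ to $a\mathcal{H}\mapsto ga\mathcal{H}$. $\mathbf{vect}$ is the category of finite-dimensional complex vector spaces; $F:\mathbf{set}\to\mathbf{vect}$ is the free vector space functor (left adjoint of the forgetful functor), and for a $\mathcal{G}$-set $X$, $\mathbb{C}[X]:=F\circ X$. $\mathrm{Tri}:\mathcal{H}\to\mathbf{vect}$ is the trivial representation ($x\mapsto\mathbb{C}$, morphisms $\mapsto\mathrm{id}_\mathbb{C}$), and $\mathrm{Ind}^\mathcal{G}_\mathcal{H}:\mathbf{vect}^\mathcal{H}\to\mathbf{vect}^\mathcal{G}$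 is the left adjoint of restriction along the inclusion $\mathcal{H}\hookrightarrow\mathcal{G}$ (left Kan extension along the inclusion). *)

(* Defs.v *)
From HB Require Import structures.
From mathcomp Require Import all_boot all_algebra.
From mathcomp Require Import complex.
From mathcomp Require Import reals Rstruct.
Unset Printing Implicit Defensive.
Import GRing.Theory.
Local Open Scope ring_scope.

Definition Cfield : fieldType := Rdefinitions.R[i].

(* A finite (nonempty) groupoid.  gcomp g g' is the composite  g g'
   (first g', then g). *)
Record groupoid := Groupoid {
  gobj : finType;
  ghom : gobj -> gobj -> finType;
  gid : forall x, ghom x x;
  gcomp : forall {x y z}, ghom y z -> ghom x y -> ghom x z;
  ginv : forall {x y}, ghom x y -> ghom y x;
  gcompA : forall x y z w (f : ghom z w) (g : ghom y z) (h : ghom x y),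
      gcomp f (gcomp g h) = gcomp (gcomp f g) h;
  gcomp1r : forall x y (f : ghom x y), gcomp f (gid x) = f;
  gcomp1l : forall x y (f : ghom x y), gcomp (gid y) f = f;
  ginvr : forall x y (f : ghom x y), gcomp f (ginv f) = gid y;
  ginvl : forall x y (f : ghom x y), gcomp (ginv f) f = gid x;
  gobj_nonempty : (0 < #|gobj|)%N
}.
Arguments gid {_} _.
Arguments gcomp {_ _ _ _}.
Arguments ginv {_ _ _}.
Arguments ghom : clear implicits.

Section Groupoids.
Variable G : groupoid.

Definition subgpred := forall x y : gobj G, ghom G x y -> bool.

Definition is_subgroupoid (H : subgpred) : Prop :=
  [/\ forall x y z (g : ghom G y z) (g' : ghom G x y),
        H y z g -> H x y g' -> H x z (gcomp g g'),
      forall x y (g : ghom G x y), H x y g -> H y x (ginv g)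
    & forall x y (g : ghom G x y), H x y g -> H x x (gid x) && H y y (gid y)].

Definition wide (H : subgpred) : Prop := forall x, H x x (gid x).

Definition connected (H : subgpred) : Prop :=
  forall x y : gobj G, exists h : ghom G x y, H x y h.

Variable H : subgpred.

Definition Mor (x : gobj G) : finType := {y : gobj G & ghom G y x}.

Definition simH x (a b : Mor x) : bool :=
  H (tag b) (tag a) (gcomp (ginv (tagged a)) (tagged b)).

Definition cls x (a : Mor x) : {set Mor x} := [set b | simH x a b].

Definition quot (x : gobj G) : finType :=
  {C : {set Mor x} | [exists a, C == cls x a]}.

Definition repr_of x (C : quot x) : Mor x :=
  odflt (Tagged (fun y => ghom G y x) (gid x)) [pick b in val C].

Definition postc x y (g : ghom G x y) (a : Mor x) : Mor y :=
  Tagged (fun z => ghom G z y) (gcomp g (tagged a)).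

Lemma cls_in_quot x (a : Mor x) : [exists a', cls x a == cls x a'].
Proof. by apply/existsP; exists a. Qed.

Definition quot_act x y (g : ghom G x y) (C : quot x) : quot y :=
  exist _ (cls y (postc x y g (repr_of x C))) (cls_in_quot y _).

End Groupoids.
Arguments is_subgroupoid {G}.
Arguments wide {G}.
Arguments connected {G}.

Section Reps.
Variable K : fieldType.
Variable G : groupoid.

Record prerep := PreRep {
  rsp : gobj G -> vectType K;
  ract : forall x y, ghom G x y -> 'Hom(rsp x, rsp y)
}.
Arguments ract _ {_ _}.

Definition is_rep (V : prerep) : Prop :=
  (forall x, ract V (gid x) = \1%VF) /\
  (forall x y z (g : ghom G y z) (g' : ghom G x y),
      ract V (gcomp g g') = (ract V g \o ract V g')%VF).

Definition is_nat {V W : prerep} (t : forall x, 'Hom(rsp V x, rsp W x)) : Prop :=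
  forall x y (g : ghom G x y), (t y \o ract V g = ract W g \o t x)%VF.

Definition is_natH (H : subgpred G) {V W : prerep}
    (t : forall x, 'Hom(rsp V x, rsp W x)) : Prop :=
  forall x y (g : ghom G x y), H x y g ->
    (t y \o ract V g = ract W g \o t x)%VF.

Definition rep_iso (V W : prerep) : Prop :=
  exists (t : forall x, 'Hom(rsp V x, rsp W x))
         (u : forall x, 'Hom(rsp W x, rsp V x)),
    [/\ is_nat t, is_nat u &
        forall x, (u x \o t x = \1)%VF /\ (t x \o u x = \1)%VF].

(* The trivial representation x |-> C, g |-> id (its restriction to H is
   the trivial representation Tri of H). *)
Definition Tri : prerep := PreRep (fun _ => (K^o : vectType K)) (fun _ _ _ => \1%VF).

(* Free vector space functor F : set -> vect on finite sets:
   F X = K^X with basis X, F f (e_c) = e_(f c). *)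
Definition FreeVect (X : finType) : vectType K := {ffun X -> K^o}.
Definition free_map (X Y : finType) (f : X -> Y) : 'Hom(FreeVect X, FreeVect Y) :=
  linfun (fun v : FreeVect X => ([ffun d => \sum_(c | f c == d) v c] : FreeVect Y)).

Definition CGH (H : subgpred G) : prerep :=
  PreRep (fun x => FreeVect (quot G H x))
          (fun x y g => free_map _ _ (quot_act G H x y g)).

(* (I, eta) is Ind^G_H Tri together with its unit eta : Tri -> Res I, i.e. a
   universal arrow from Tri to the restriction functor (value at Tri of the
   left adjoint of restriction). *)
Definition is_Ind_Tri (H : subgpred G) (I : prerep)
    (eta : forall x, 'Hom(rsp Tri x, rsp I x)) : Prop :=
  [/\ is_rep I, is_natH H eta &
    forall W : prerep, is_rep W ->
    forall phi : forall x, 'Hom(rsp Tri x, rsp W x), is_natH H phi ->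
      exists psi : forall x, 'Hom(rsp I x, rsp W x),
        [/\ is_nat psi,
            forall x, (psi x \o eta x = phi x)%VF &
            forall psi' : forall x, 'Hom(rsp I x, rsp W x), is_nat psi' ->
              (forall x, (psi' x \o eta x = phi x)%VF) ->
              forall x, psi' x = psi x]].

End Reps.
Arguments prerep : clear implicits.
Arguments PreRep {K G}.
Arguments rsp {K G}.
Arguments ract {K G} _ {_ _}.
Arguments is_rep {K G}.
Arguments is_nat {K G V W}.
Arguments is_natH {K G} H {V W}.
Arguments rep_iso {K G}.
Arguments Tri {K G}.
Arguments CGH K {G}.
Arguments is_Ind_Tri {K G}.

(* Main.v *)
Require Import Defs.
From HB Require Import structures.
From mathcomp Require Import all_boot all_algebra.
From mathcomp Require Import complex.
From mathcomp Require Import reals Rstruct.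
Import GRing.Theory.
Local Open Scope ring_scope.

Arguments gcompA {_ _ _ _ _}.
Arguments gcomp1r {_ _ _}.
Arguments gcomp1l {_ _ _}.
Arguments ginvr {_ _ _}.
Arguments ginvl {_ _ _}.

Section GLemmas.
Variable G : groupoid.
Implicit Types x y z : gobj G.

Lemma ginv_id x : ginv (gid x) = gid x :> ghom G x x.
Proof. by rewrite -[RHS](ginvr (gid x)) gcomp1l. Qed.

Lemma gKl x y z (f : ghom G y z) (g : ghom G x y) : gcomp (ginv f) (gcomp f g) = g.
Proof. by rewrite gcompA ginvl gcomp1l. Qed.

Lemma gKr x y z (f : ghom G y z) (g : ghom G x z) : gcomp f (gcomp (ginv f) g) = g.
Proof. by rewrite gcompA ginvr gcomp1l. Qed.

Lemma ginv_uniq x y (f : ghom G x y) (g : ghom G y x) : gcomp g f = gid x -> g = ginv f.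
Proof. by move=> e; rewrite -[g]gcomp1r -(ginvr f) gcompA e gcomp1l. Qed.

Lemma ginvK x y (f : ghom G x y) : ginv (ginv f) = f.
Proof. by symmetry; apply: ginv_uniq; rewrite ginvr. Qed.

Lemma ginvM x y z (f : ghom G y z) (g : ghom G x y) :
  ginv (gcomp f g) = gcomp (ginv g) (ginv f).
Proof. by symmetry; apply: ginv_uniq; rewrite -gcompA gKl ginvl. Qed.

Variable H : subgpred G.
Hypotheses (sH : is_subgroupoid H) (wH : wide H).

Lemma simH_refl x (a : Mor G x) : simH G H x a a.
Proof. by rewrite /simH ginvl wH. Qed.

Lemma simH_sym {x} {a b : Mor G x} : simH G H x a b -> simH G H x b a.
Proof.
case: sH => _ Hinv _; rewrite /simH => /Hinv.
by rewrite ginvM ginvK.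
Qed.

Lemma simH_trans {x} {a b c : Mor G x} :
  simH G H x a b -> simH G H x b c -> simH G H x a c.
Proof.
case: sH => Hc _ _; rewrite /simH => hab hbc.
by have := Hc _ _ _ _ _ hab hbc; rewrite -gcompA gKr.
Qed.

Lemma cls_eq {x} {a b : Mor G x} : simH G H x a b -> cls G H x a = cls G H x b.
Proof.
move=> ab; apply/setP => c; rewrite !inE; apply/idP/idP => h.
  exact: simH_trans (simH_sym ab) h.
exact: simH_trans ab h.
Qed.

Definition clsq {x} (a : Mor G x) : quot G H x :=
  exist _ (cls G H x a) (cls_in_quot G H x a).

Lemma repr_in x (C : quot G H x) : Defs.repr_of G H x C \in val C.
Proof.
rewrite /Defs.repr_of; case: (pickP (mem (val C))) => [b //|].
by case: C => S /= /existsP [a /eqP ->] /(_ a); rewrite /= inE simH_refl.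
Qed.

Lemma repr_clsq x (a : Mor G x) : simH G H x a (Defs.repr_of G H x (clsq a)).
Proof. by have := repr_in _ (clsq a); rewrite inE. Qed.

Lemma clsq_repr x (C : quot G H x) : clsq (Defs.repr_of G H x C) = C.
Proof.
apply: val_inj => /=; have := repr_in _ C.
case: C => S pf /=; case/existsP: (pf) => a /eqP eS.
move: (Defs.repr_of _ _ _ _) => r; rewrite eS inE => h; by rewrite -(cls_eq h).
Qed.

Lemma clsqP x (a b : Mor G x) : reflect (clsq a = clsq b) (simH G H x a b).
Proof.
apply: (iffP idP) => [h|e]; first by apply: val_inj; exact: cls_eq.
have : b \in cls G H x b by rewrite inE simH_refl.
by have /(congr1 val) /= <- := e; rewrite inE.
Qed.

Lemma postc_sim {x y} (g : ghom G x y) {a b : Mor G x} :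
  simH G H x a b -> simH G H y (postc G x y g a) (postc G x y g b).
Proof. by rewrite /simH /= ginvM -gcompA gKl. Qed.

Lemma quot_act_clsq x y (g : ghom G x y) (a : Mor G x) :
  quot_act G H x y g (clsq a) = clsq (postc G x y g a).
Proof.
apply/esym/clsqP; apply: postc_sim; exact: repr_clsq.
Qed.

Lemma postc_id x (a : Mor G x) : postc G x x (gid x) a = a.
Proof. by case: a => y f; rewrite /postc /= gcomp1l. Qed.

Lemma postc_comp x y z (g : ghom G y z) (g' : ghom G x y) (a : Mor G x) :
  postc G x z (gcomp g g') a = postc G y z g (postc G x y g' a).
Proof. by case: a => w f; rewrite /postc /= gcompA. Qed.

Lemma quot_act_id x (C : quot G H x) : quot_act G H x x (gid x) C = C.
Proof. by rewrite -[in LHS](clsq_repr _ C) quot_act_clsq postc_id clsq_repr. Qed.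

Lemma quot_act_comp x y z (g : ghom G y z) (g' : ghom G x y) (C : quot G H x) :
  quot_act G H x z (gcomp g g') C = quot_act G H y z g (quot_act G H x y g' C).
Proof.
by rewrite -[in LHS](clsq_repr _ C) -[in RHS](clsq_repr _ C) !quot_act_clsq postc_comp.
Qed.

End GLemmas.

Section LinfunE.
Variables (K : fieldType) (V W : vectType K) (f : V -> W).
Hypothesis lf : linear f.
Definition fL := f.
HB.instance Definition _ := GRing.isLinear.Build K V W *:%R fL lf.
Lemma linfunE v : linfun f v = f v.
Proof. exact: (lfunE fL). Qed.
End LinfunE.

Section Free.
Variable K : fieldType.

Lemma push_sum (V : zmodType) (X Y : finType) (f : X -> Y) (F : X -> V) :
  \sum_x F x = \sum_y \sum_(x | f x == y) F x.
Proof. by rewrite (partition_big f xpredT). Qed.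

Lemma free_mapE (X Y : finType) (f : X -> Y) (v : FreeVect K X) :
  free_map K X Y f v = [ffun d => \sum_(c | f c == d) v c].
Proof.
rewrite /free_map linfunE // => a u w; apply/ffunP => d; rewrite !ffunE.
rewrite scaler_sumr -big_split; apply: eq_bigr => c _; rewrite !ffunE //.
Qed.

Definition ev {X : finType} (c : X) : FreeVect K X := [ffun d => (c == d)%:R].

Lemma decomp (X : finType) (v : FreeVect K X) : v = \sum_c v c *: ev c.
Proof.
apply/ffunP => d; rewrite sum_ffunE (bigD1 d) //= big1 ?addr0.
  by rewrite !ffunE eqxx; rewrite /GRing.scale /= mulr1.
by move=> c /negbTE cd; rewrite !ffunE cd /GRing.scale /= mulr0.
Qed.

Lemma free_map_ev (X Y : finType) (f : X -> Y) (c : X) :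
  free_map K X Y f (ev c) = ev (f c).
Proof.
rewrite free_mapE; apply/ffunP => d; rewrite !ffunE.
rewrite (eq_bigr (fun c' => if c' == c then 1 else 0)); last first.
  by move=> c' _; rewrite ffunE eq_sym; case: (c' == c).
rewrite -big_mkcondr /=.
case: (eqVneq (f c) d) => [<-|ne].
  by rewrite (eq_bigl (fun c' => c' == c)) ?big_pred1_eq // => c'; case: (eqVneq c' c) => [->|]; rewrite ?eqxx ?andbF.
rewrite big_pred0 // => c'; case: (eqVneq c' c) => [->|]; rewrite ?andbF // andbT; exact/negbTE.
Qed.

Lemma free_map_Zev (X Y : finType) (f : X -> Y) (k : K) (c : X) :
  free_map K X Y f (k *: ev c) = k *: ev (f c).
Proof.
apply/ffunP => d; have /ffunP/(_ d) := @free_map_ev X Y f c.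
rewrite !free_mapE !ffunE /= => <-.
rewrite scaler_sumr; apply: eq_bigr => c' _; rewrite !ffunE //.
Qed.

Lemma free_map_ext (X Y : finType) (f g : X -> Y) : f =1 g ->
  free_map K X Y f = free_map K X Y g.
Proof.
move=> fg; apply/lfunP => v; rewrite !free_mapE; apply/ffunP => d; rewrite !ffunE.
by apply: eq_bigl => c; rewrite fg.
Qed.

Lemma free_map_comp (X Y Z : finType) (f : Y -> Z) (g : X -> Y) :
  free_map K X Z (f \o g) = (free_map K Y Z f \o free_map K X Y g)%VF.
Proof.
apply/lfunP => v; rewrite comp_lfunE !free_mapE; apply/ffunP => d; rewrite !ffunE.
rewrite (partition_big g (fun b => f b == d)) //=; apply: eq_bigr => b fb.
rewrite ffunE; apply: eq_bigl => c; case: (eqVneq (g c) b) => [->|]; rewrite ?fb ?andbF //.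
Qed.

Lemma free_map_id (X : finType) (f : X -> X) : f =1 id ->
  free_map K X X f = \1%VF.
Proof.
move=> fid; apply/lfunP => v; rewrite id_lfunE free_mapE; apply/ffunP => d.
rewrite ffunE (eq_bigl (fun c => c == d)) ?big_pred1_eq // => c; by rewrite fid.
Qed.

Lemma push_scale (V : lmodType K) (X Y : finType) (f : X -> Y) (v : FreeVect K X) (F : Y -> V) :
  \sum_y (free_map K X Y f v) y *: F y = \sum_x v x *: F (f x).
Proof.
rewrite [RHS](push_sum _ _ _ f); apply: eq_bigr => y _; rewrite free_mapE ffunE scaler_suml.
by apply: eq_bigr => x /eqP ->.
Qed.

End Free.

Section Main.
Variables (K : fieldType) (G : groupoid) (H : subgpred G).
Hypotheses (sH : is_subgroupoid H) (wH : wide H).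

Lemma CGH_rep : is_rep (CGH K H).
Proof.
split=> [x|x y z g g'] /=.
  by apply: free_map_id => C; apply: quot_act_id.
rewrite -free_map_comp; apply: free_map_ext => C /=; exact: quot_act_comp.
Qed.

Definition idm (x : gobj G) : Mor G x := Tagged (fun y => ghom G y x) (gid x).

Definition etaI x : 'Hom(rsp (@Tri K G) x, rsp (CGH K H) x) :=
  linfun (fun k : K^o => k *: (ev K (clsq G H (idm x)) : FreeVect K (quot G H x))).

Lemma etaE x k : etaI x k = k *: ev K (clsq G H (idm x)).
Proof.
rewrite /etaI linfunE // => a u v /=; rewrite scalerDl scalerA //.
Qed.

Lemma postc_idm x y (g : ghom G x y) : postc G x y g (idm x) = Tagged (fun z => ghom G z y) g.
Proof. by rewrite /postc /= gcomp1r. Qed.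

Lemma eta_nat : is_natH H etaI.
Proof.
move=> x y h Hh; apply/lfunP => k; rewrite !comp_lfunE id_lfunE /= !etaE.
rewrite free_map_Zev (quot_act_clsq _ _ sH wH) postc_idm; congr (_ *: ev K _).
apply/(clsqP _ _ sH wH); rewrite /simH /= ginv_id gcomp1l //.
Qed.

Section Univ.
Variable W : prerep K G.
Hypothesis hW : is_rep W.
Variable phi : forall x, 'Hom(rsp (@Tri K G) x, rsp W x).
Hypothesis hphi : is_natH H phi.

Let w x : rsp W x := phi x (1 : K^o).
Definition wv {x} (a : Mor G x) : rsp W x := ract W (tagged a) (w (tag a)).

Lemma ractM x y z (g : ghom G y z) (g' : ghom G x y) u :
  ract W (gcomp g g') u = ract W g (ract W g' u).
Proof. by case: hW => _ ->; rewrite comp_lfunE. Qed.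

Lemma ract1 x u : ract W (gid x) u = u.
Proof. by case: hW => -> _; rewrite id_lfunE. Qed.

Lemma wv_sim {x} {a b : Mor G x} : simH G H x a b -> wv a = wv b.
Proof.
rewrite /simH => h; have := hphi _ _ _ h => /lfunP /(_ 1).
rewrite !comp_lfunE id_lfunE /= -/(w _) -/(w _) => e.
by rewrite /wv e -ractM gKr.
Qed.

Definition wq {x} (C : quot G H x) := wv (Defs.repr_of G H x C).

Lemma wq_clsq x (a : Mor G x) : wq (clsq G H a) = wv a.
Proof. by apply/esym/wv_sim; apply: (repr_clsq _ _ wH). Qed.

Definition psi x : 'Hom(rsp (CGH K H) x, rsp W x) :=
  linfun (fun v : FreeVect K (quot G H x) => \sum_C v C *: wq C).

Lemma psiE x v : psi x v = \sum_C v C *: wq C.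
Proof.
rewrite /psi linfunE // => a u v' /=; rewrite scaler_sumr -big_split.
by apply: eq_bigr => C _; rewrite !ffunE scalerDl scalerA.
Qed.

Lemma psi_ev x (C : quot G H x) : psi x (ev K C) = wq C.
Proof.
rewrite psiE (bigD1 C) //= big1 ?addr0.
  by rewrite ffunE eqxx scale1r.
by move=> D /negbTE; rewrite ffunE eq_sym => ->; rewrite scale0r.
Qed.

Lemma psi_nat : is_nat psi.
Proof.
move=> x y g; apply/lfunP => v; rewrite !comp_lfunE /= !psiE push_scale.
rewrite linear_sum; apply: eq_bigr => C _; rewrite linearZ /=; congr (_ *: _).
by rewrite /quot_act -/(clsq G H _) wq_clsq /wv /= ractM.
Qed.

Lemma phi_scale x (k : K^o) : phi x k = k *: w x.
Proof.
rewrite /w -linearZ /=; congr (phi x _).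
by rewrite /GRing.scale /= mulr1.
Qed.

Lemma psi_eta x : (psi x \o etaI x)%VF = phi x.
Proof.
apply/lfunP => k; rewrite comp_lfunE etaE linearZ /= psi_ev wq_clsq.
by rewrite phi_scale /wv /= ract1.
Qed.

Lemma psi_unique (psi' : forall x, 'Hom(rsp (CGH K H) x, rsp W x)) :
  is_nat psi' -> (forall x, (psi' x \o etaI x)%VF = phi x) -> forall x, psi' x = psi x.
Proof.
move=> n' e' x; apply/lfunP => v.
rewrite [in LHS](decomp _ _ v) linear_sum psiE; apply: eq_bigr => C _.
rewrite linearZ /=; congr (_ *: _).
set r := Defs.repr_of G H x C.
have eC : ev K C = ract (CGH K H) (tagged r) (etaI (tag r) 1).
  rewrite etaE scale1r /= free_map_ev (quot_act_clsq _ _ sH wH).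
  rewrite postc_idm; congr (ev K _).
  rewrite -[LHS](clsq_repr _ _ sH wH _ C) -/r; congr (clsq G H _).
  by case: (r).
rewrite eC; have := n' _ _ (tagged r) => /lfunP /(_ (etaI (tag r) 1)).
rewrite !comp_lfunE => ->; have := e' (tag r) => /lfunP /(_ 1).
by rewrite comp_lfunE => ->.
Qed.

End Univ.

Lemma CGH_Ind : is_Ind_Tri H (CGH K H) etaI.
Proof.
split; [exact: CGH_rep | exact: eta_nat |].
move=> W hW phi hphi; exists (psi W phi); split.
- exact: psi_nat.
- exact: psi_eta.
- exact: psi_unique.
Qed.

End Main.

Section Iso.
Variables (K : fieldType) (G : groupoid) (H : subgpred G).

Lemma nat_comp (U V W : prerep K G) (t : forall x, 'Hom(rsp U x, rsp V x))
  (u : forall x, 'Hom(rsp V x, rsp W x)) :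
  is_nat t -> is_nat u -> is_nat (fun x => (u x \o t x)%VF).
Proof.
move=> tn un x y g /=.
by rewrite -comp_lfunA tn comp_lfunA un comp_lfunA.
Qed.

Lemma nat_id (U : prerep K G) : is_nat (fun x => (\1 : 'Hom(rsp U x, rsp U x))%VF).
Proof. by move=> x y g; rewrite comp_lfun1l comp_lfun1r. Qed.

Lemma ind_iso (I1 I2 : prerep K G) eta1 eta2 :
  is_Ind_Tri H I1 eta1 -> is_Ind_Tri H I2 eta2 -> rep_iso I1 I2.
Proof.
case=> r1 n1 U1; case=> r2 n2 U2.
have [t [tn te _]] := U1 I2 r2 eta2 n2.
have [u [un ue _]] := U2 I1 r1 eta1 n1.
have [p1 [_ _ q1]] := U1 I1 r1 eta1 n1.
have [p2 [_ _ q2]] := U2 I2 r2 eta2 n2.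
exists t, u; split => // x; split.
- rewrite (q1 (fun x => (u x \o t x)%VF)) ?(q1 (fun x => \1%VF)) //.
  + exact: nat_id.
  + by move=> y; rewrite comp_lfun1l.
  + exact: nat_comp.
  + by move=> y; rewrite -comp_lfunA te ue.
- rewrite (q2 (fun x => (t x \o u x)%VF)) ?(q2 (fun x => \1%VF)) //.
  + exact: nat_id.
  + by move=> y; rewrite comp_lfun1l.
  + exact: nat_comp.
  + by move=> y; rewrite -comp_lfunA ue te.
Qed.
End Iso.

Theorem theorem4p2 (G : groupoid) (H : subgpred G) :
  is_subgroupoid H -> wide H -> connected H ->
  [/\ is_rep (CGH Cfield H),
      exists eta, is_Ind_Tri H (CGH Cfield H) eta
    & forall (I : prerep Cfield G) eta, is_Ind_Tri H I eta ->
        rep_iso (CGH Cfield H) I].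
Proof.
move=> sH wH _; have hI := CGH_Ind Cfield G H sH wH.
split; first exact: (CGH_rep Cfield G H sH wH).
  exact: (ex_intro _ _ hI).
move=> I e hIe; exact: ind_iso hI hIe.
Qed.
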